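(* Let $\mathscr C$ and $J$ be as defined below. (i) Let $H$ be a non-trivial rank one subgroup of $\mathbb{R}$. Then $F_H(V):=V\cap H\cap(0,\infty)$, with a morphism $n\in\mathrm{Hom}_{\mathscr C}(V,W)$ acting as multiplication by $n$, defines a flat continuous functor $F_H:\mathscr C\to\mathfrak{Sets}$. (ii) The map $H\mapsto\mathfrak{p}_H$, which associates to a non-trivial rank one subgroup $H\subset\mathbb{R}$ the point of the topos $\mathfrak{Sh}(\mathscr C,J)$ represented by $F_H$, is injective from the set of non-trivial rank one subgroups of $\mathbb{R}$ to the set of isomorphism classes of points of this topos.
   Context: $\mathbb{N}^{\times}$ is the multiplicative monoid of positive integers. $\mathscr C$ is the small category whose objects are the (possibly empty) bounded open subintervals of $[0,\infty)$ (including intervals $[0,a)$), with $\mathrm{Hom}_{\mathscr C}(\Omega,\Omega')=\{n\in\mathbb{N}^{\times}\mid n\Omega\subset\Omega'\}$ for $\Omega\neq\emptyset$, $\mathrm{Hom}_{\mathscr C}(\emptyset,\Omega')$ a singleton, composition being multiplication. $J$ is the Grothendieck topology generated by ordinary open covers of intervals by subintervals. A rank one subgroup of $\mathbb{R}$ is a subgroup isomorphic to a non-zero subgroup of $\mathbb{Q}$. A functor $F:\mathscr C\to\mathfrak{Sets}$ is flat iff it is filtering: (1) $F(C)\neq\emptyset$ for some object $C$; (2) for $a_j\in F(C_j)$, $j=1,2$, there exist an object $C$, $a\in F(C)$ and morphisms $u_j:C\to C_j$ with $F(u_j)a=a_j$; (3) for morphisms $u,v:C\to D$ and $a\in F(C)$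 with $F(u)a=F(v)a$ there exist an object $B$, $b\in F(B)$ and $w:B\to C$ with $u\circ w=v\circ w$ and $F(w)b=a$. A flat functor is continuous iff for every object $U$ and cover $\{U_j\subset U\}$ the maps $F(U_j)\to F(U)$ are jointly surjective. Points of $\mathfrak{Sh}(\mathscr C,J)$ correspond (up to equivalence) to flat continuous functors $\mathscr C\to\mathfrak{Sets}$. *)

(* Defs.v *)
From Stdlib Require Import Reals Lra Lia QArith.
Open Scope R_scope.

(** Objects of C: the (possibly empty) bounded open subintervals of [0,oo),
    open for the relative topology, i.e. the empty set, (a,b) with 0<=a<b,
    and [0,b) with 0<b.  An object is given by its underlying subset of R. *)
Definition is_C_interval (S : R -> Prop) : Prop :=
  (forall x, ~ S x)
  \/ (exists a b, 0 <= a /\ a < b /\ forall x, S x <-> (a < x /\ x < b))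
  \/ (exists b, 0 < b /\ forall x, S x <-> (0 <= x /\ x < b)).

Record Obj := mkObj { carrier : R -> Prop ; carrier_ok : is_C_interval carrier }.

Definition nonemptyO (U : Obj) : Prop := exists x, carrier U x.

(** Morphisms U -> V are positive integers n with n U ⊂ V when U is nonempty;
    Hom(∅, V) is a singleton, represented by n = 1.
    Composition is multiplication (and the unique map out of ∅). *)
Definition hom (U V : Obj) (n : nat) : Prop :=
  (0 < n)%nat
  /\ (nonemptyO U -> forall x, carrier U x -> carrier V (INR n * x))
  /\ (~ nonemptyO U -> n = 1%nat).

Record functor := mkFunctor {
  Fob : Obj -> Type ;
  Fmor : forall (U V : Obj) (n : nat), hom U V n -> Fob U -> Fob V }.

Arguments Fmor f {U V n} p x.

(** Functor laws.  The composite of n : U -> V and m : V -> W is the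
    morphism k : U -> W with k = m*n (when U ≠ ∅; when U = ∅ it is the
    unique morphism). *)
Definition is_functor (F : functor) : Prop :=
  (forall U (p : hom U U 1) x, Fmor F p x = x)
  /\ (forall U V W n m k (p : hom U V n) (q : hom V W m) (r : hom U W k) x,
        (nonemptyO U -> k = (m * n)%nat) ->
        Fmor F r x = Fmor F q (Fmor F p x)).

(** Flat = filtering (conditions (1)-(3) of the context). *)
Definition is_flat (F : functor) : Prop :=
  (exists (C : Obj) (a : Fob F C), True)
  /\ (forall (C1 C2 : Obj) (a1 : Fob F C1) (a2 : Fob F C2),
        exists (C : Obj) (a : Fob F C) (n1 n2 : nat)
               (u1 : hom C C1 n1) (u2 : hom C C2 n2),
          Fmor F u1 a = a1 /\ Fmor F u2 a = a2)
  /\ (forall (C D : Obj) (u v : nat) (pu : hom C D u) (pv : hom C D v)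
             (a : Fob F C),
        Fmor F pu a = Fmor F pv a ->
        exists (B : Obj) (b : Fob F B) (w : nat) (pw : hom B C w),
          (* u ∘ w = v ∘ w as morphisms B -> D *)
          (nonemptyO B -> (u * w)%nat = (v * w)%nat)
          /\ Fmor F pw b = a).

Definition is_cover (U : Obj) (I : Type) (Uj : I -> Obj) : Prop :=
  (forall j x, carrier (Uj j) x -> carrier U x)
  /\ (forall x, carrier U x -> exists j, carrier (Uj j) x).

(** Inclusions are the morphisms n = 1. *)
Definition is_continuous (F : functor) : Prop :=
  forall (U : Obj) (I : Type) (Uj : I -> Obj),
    is_cover U I Uj ->
    forall y : Fob F U,
      exists (j : I) (x : Fob F (Uj j)) (p : hom (Uj j) U 1), Fmor F p x = y.

(** Natural isomorphism of functors (= isomorphism of the associated points). *)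
Definition nat_iso (F G : functor) : Prop :=
  exists (alpha : forall U, Fob F U -> Fob G U)
         (beta : forall U, Fob G U -> Fob F U),
    (forall U x, beta U (alpha U x) = x)
    /\ (forall U y, alpha U (beta U y) = y)
    /\ (forall U V n (p : hom U V n) x,
          alpha V (Fmor F p x) = Fmor G p (alpha U x)).

Definition is_subgroup (S : R -> Prop) : Prop :=
  S 0 /\ (forall x y, S x -> S y -> S (x + y)) /\ (forall x, S x -> S (- x)).

Record subgroupR := mkSubgroupR { Hset : R -> Prop ; Hset_sub : is_subgroup Hset }.

Definition nontrivial (H : subgroupR) : Prop := exists x, Hset H x /\ x <> 0.

(** Rank one: isomorphic to a non-zero subgroup of Q.  Subgroups of Q are
    represented by their (isomorphic) images in R under Q2R. *)
Definition rank_one (H : subgroupR) : Prop :=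
  exists (S : R -> Prop) (phi : R -> R),
    is_subgroup S
    /\ (forall s, S s -> exists q : Q, s = Q2R q)
    /\ (exists s, S s /\ s <> 0)
    /\ (forall x, Hset H x -> S (phi x))
    /\ (forall x y, Hset H x -> Hset H y -> phi (x + y) = phi x + phi y)
    /\ (forall x y, Hset H x -> Hset H y -> phi x = phi y -> x = y)
    /\ (forall s, S s -> exists x, Hset H x /\ phi x = s).

Lemma Hset_mulnat (H : subgroupR) (n : nat) (x : R) :
  Hset H x -> Hset H (INR n * x).
Proof.
  destruct (Hset_sub H) as [H0 [Hadd _]]. intros Hx.
  induction n as [|n IH].
  - simpl. replace (0 * x) with 0 by ring. exact H0.
  - rewrite S_INR. replace ((INR n + 1) * x) with (INR n * x + x) by ring.
    apply Hadd; assumption.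
Qed.

Definition FH_ob (H : subgroupR) (V : Obj) : Type :=
  { x : R | carrier V x /\ Hset H x /\ 0 < x }.

Definition FH_mor (H : subgroupR) (U V : Obj) (n : nat) (p : hom U V n)
  (x : FH_ob H U) : FH_ob H V.
Proof.
  destruct x as [x [xU [xH xpos]]].
  exists (INR n * x). destruct p as [npos [pn _]]. split; [|split].
  - apply pn; [exists x; exact xU | exact xU].
  - apply Hset_mulnat; exact xH.
  - apply Rmult_lt_0_compat; [apply lt_0_INR; exact npos | exact xpos].
Defined.

Definition FH (H : subgroupR) : functor := mkFunctor (FH_ob H) (FH_mor H).

(* Main.v *)
Require Import Defs.
From Stdlib Require Import Reals Lra Lia QArith ZArith ProofIrrelevance.
Open Scope R_scope.

Lemma FH_eq H U (x y : FH_ob H U) : proj1_sig x = proj1_sig y -> x = y.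
Proof.
  destruct x as [x px], y as [y py]; simpl; intros ->.
  f_equal; apply proof_irrelevance.
Qed.

Lemma FH_mor_val H U V n (p : hom U V n) (x : FH_ob H U) :
  proj1_sig (FH_mor H U V n p x) = INR n * proj1_sig x.
Proof. destruct x as [x [? [? ?]]]; destruct p as [? [? ?]]; reflexivity. Qed.

Definition ivl (a b : R) : R -> Prop := fun x => a < x /\ x < b.
Lemma ivl_ok a b : 0 <= a -> a < b -> is_C_interval (ivl a b).
Proof. intros h1 h2; right; left; exists a, b; split; [lra|split; [lra|]]. intros x; unfold ivl; tauto. Qed.
Definition mkI a b (h1 : 0 <= a) (h2 : a < b) : Obj := mkObj (ivl a b) (ivl_ok a b h1 h2).

Lemma Hneg (H : subgroupR) x : Hset H x -> Hset H (- x).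
Proof. destruct (Hset_sub H) as [? [? ?]]; auto. Qed.
Lemma Hadd' (H : subgroupR) x y : Hset H x -> Hset H y -> Hset H (x + y).
Proof. destruct (Hset_sub H) as [? [? ?]]; auto. Qed.
Lemma Hzero (H : subgroupR) : Hset H 0.
Proof. destruct (Hset_sub H) as [? [? ?]]; auto. Qed.

Lemma is_functor_FH H : is_functor (FH H).
Proof.
  split.
  - intros U p x. apply FH_eq. cbn [Fmor FH]. rewrite FH_mor_val. simpl. ring.
  - intros U V W n m k p q r x Hk. apply FH_eq. cbn [Fmor FH].
    rewrite !FH_mor_val. rewrite Hk. rewrite mult_INR; ring.
    exists (proj1_sig x). destruct x as [x [? ?]]; assumption.
Qed.

Lemma is_continuous_FH H : is_continuous (FH H).
Proof.
  intros U I Uj [Hsub Hcov] y.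
  destruct y as [y0 [yU [yH ypos]]] eqn:Ey.
  destruct (Hcov y0 yU) as [j Hj].
  assert (p : hom (Uj j) U 1).
  { split; [lia|split].
    - intros _ z Hz. simpl. rewrite Rmult_1_l. eauto.
    - auto. }
  exists j, (exist _ y0 (conj Hj (conj yH ypos))), p.
  apply FH_eq. cbn [Fmor FH]. rewrite FH_mor_val. simpl. ring.
Qed.

Section Iso.
Variables H1 H2 : subgroupR.
Variable alpha : forall U, Fob (FH H1) U -> Fob (FH H2) U.
Hypothesis Hnat : forall U V n (p : hom U V n) x,
  alpha V (Fmor (FH H1) p x) = Fmor (FH H2) p (alpha U x).

Lemma alpha_val a b h1 h2 (x : FH_ob H1 (mkI a b h1 h2)) :
  proj1_sig (alpha _ x) = proj1_sig x.
Proof.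
  destruct (Req_dec (proj1_sig (alpha _ x)) (proj1_sig x)) as [E|NE]; auto.
  exfalso.
  set (y := proj1_sig (alpha _ x)) in *.
  destruct x as [r [[ra rb] [Hr rpos]]] eqn:Ex. simpl in NE.
  assert (Ay : 0 < Rabs (y - r)) by (apply Rabs_pos_lt; lra).
  set (e := Rmin (Rmin (r - a) (b - r)) (Rabs (y - r))).
  assert (e1 : e <= r - a) by (unfold e; eapply Rle_trans; [apply Rmin_l|apply Rmin_l]).
  assert (e2 : e <= b - r) by (unfold e; eapply Rle_trans; [apply Rmin_l|apply Rmin_r]).
  assert (e3 : e <= Rabs (y - r)) by (unfold e; apply Rmin_r).
  assert (e4 : 0 < e) by (unfold e; repeat apply Rmin_glb_lt; lra).
  clearbody e.
  assert (h1' : 0 <= r - e) by lra.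
  assert (h2' : r - e < r + e) by lra.
  set (V := mkI (r - e) (r + e) h1' h2').
  assert (rV : carrier V r) by (simpl; unfold ivl; lra).
  set (xV' := exist (fun z => carrier V z /\ Hset H1 z /\ 0 < z) r
              (conj rV (conj Hr rpos)) : FH_ob H1 V).
  assert (i : hom V (mkI a b h1 h2) 1).
  { split; [lia|split]; [|auto]. intros _ z [z1 z2]. simpl. unfold ivl. lra. }
  assert (Hi : Fmor (FH H1) i xV' = x).
  { rewrite Ex. apply FH_eq. cbn [Fmor FH]. rewrite FH_mor_val. simpl. ring. }
  pose proof (Hnat _ _ _ i xV') as N. rewrite Hi in N.
  assert (Ey: y = proj1_sig (Fmor (FH H2) i (alpha V xV'))) by (unfold y; rewrite <- N, Ex; reflexivity).
  cbn [Fmor FH] in Ey. rewrite FH_mor_val in Ey.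
  pose proof (proj2_sig (alpha V xV')) as [[z1 z2] _]. simpl in Ey.
  simpl in z1, z2. unfold ivl in *. rewrite Rmult_1_l in Ey. revert e3. unfold Rabs. destruct Rcase_abs; lra.
Qed.
End Iso.

Lemma sym_ext (A B : subgroupR) : (forall r, 0 < r -> Hset A r -> Hset B r) ->
  forall x, Hset A x -> Hset B x.
Proof.
  intros K x Hx. destruct (Rtotal_order x 0) as [l|[e|g]].
  - replace x with (- - x) by ring. apply Hneg, K; [lra|]. apply Hneg, Hx.
  - subst; apply Hzero.
  - apply K; auto.
Qed.

Lemma part2 H1 H2 : nat_iso (FH H1) (FH H2) -> forall x, Hset H1 x <-> Hset H2 x.
Proof.
  intros [alpha [beta [Hba [Hab Hnat]]]] x. split; apply sym_ext; intros r rpos Hr;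
  (assert (h2 : 0 < 2 * r) by lra);
  (assert (rU : carrier (mkI 0 (2*r) (Rle_refl 0) h2) r) by (simpl; unfold ivl; lra)).
  - pose (xU := exist (fun z => carrier (mkI 0 (2*r) (Rle_refl 0) h2) z /\ Hset H1 z /\ 0 < z) r
              (conj rU (conj Hr rpos)) : FH_ob H1 _).
    pose proof (alpha_val H1 H2 alpha Hnat _ _ _ _ xU) as E.
    revert E. generalize (alpha _ xU). intros [z [Q1 [P Q2]]] E. assert (Ez : z = r) by exact E. rewrite <- Ez. exact P.
  - pose (yU := exist (fun z => carrier (mkI 0 (2*r) (Rle_refl 0) h2) z /\ Hset H2 z /\ 0 < z) r
              (conj rU (conj Hr rpos)) : FH_ob H2 _).
    pose proof (alpha_val H1 H2 alpha Hnat _ _ _ _ (beta _ yU)) as E.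
    rewrite Hab in E. simpl in E.
    revert E. generalize (beta _ yU). intros [z [Q1 [P Q2]]] E. assert (Ez : z = r) by (symmetry; exact E). rewrite <- Ez. exact P.
Qed.

Section Rank.
Variables (H : subgroupR) (phi : R -> R).
Hypothesis Had : forall x y, Hset H x -> Hset H y -> phi (x + y) = phi x + phi y.

Lemma phi0 : phi 0 = 0.
Proof. pose proof (Had 0 0 (Hzero H) (Hzero H)) as E. rewrite Rplus_0_r in E. lra. Qed.

Lemma phiN x : Hset H x -> phi (- x) = - phi x.
Proof.
  intros Hx. pose proof (Had x (-x) Hx (Hneg H x Hx)) as E.
  rewrite Rplus_opp_r, phi0 in E. lra.
Qed.

Lemma phinat n x : Hset H x -> phi (INR n * x) = INR n * phi x.
Proof.
  intros Hx. induction n as [|n IH].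
  - simpl. rewrite Rmult_0_l, phi0. ring.
  - rewrite S_INR. replace ((INR n + 1) * x) with (INR n * x + x) by ring.
    rewrite Had; [|apply Hset_mulnat; auto|auto]. rewrite IH; ring.
Qed.

Lemma phiZ z x : Hset H x -> Hset H (IZR z * x) /\ phi (IZR z * x) = IZR z * phi x.
Proof.
  intros Hx. destruct z as [|p|p].
  - simpl. rewrite Rmult_0_l, phi0. split; [apply Hzero|ring].
  - rewrite <- positive_nat_Z, <- INR_IZR_INZ. split; [apply Hset_mulnat; auto|apply phinat; auto].
  - change (Z.neg p) with (- Z.pos p)%Z. rewrite Ropp_Ropp_IZR.
    rewrite <- positive_nat_Z, <- INR_IZR_INZ.
    replace (- INR (Pos.to_nat p) * x) with (- (INR (Pos.to_nat p) * x)) by ring.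
    split; [apply Hneg, Hset_mulnat; auto|].
    rewrite phiN by (apply Hset_mulnat; auto). rewrite phinat by auto. ring.
Qed.
End Rank.

Lemma commens H : rank_one H -> forall a1 a2, Hset H a1 -> Hset H a2 -> 0 < a1 -> 0 < a2 ->
  exists P Q : nat, (0 < P)%nat /\ (0 < Q)%nat /\ INR P * a1 = INR Q * a2.
Proof.
  intros (S & phi & HS & HQ & _ & Hin & Had & Hinj & _) a1 a2 h1 h2 p1 p2.
  destruct (HQ _ (Hin a1 h1)) as [[z1 d1] E1].
  destruct (HQ _ (Hin a2 h2)) as [[z2 d2] E2].
  unfold Q2R in E1, E2; simpl in E1, E2.
  assert (D1 : IZR (Z.pos d1) <> 0) by (apply not_0_IZR; lia).
  assert (D2 : IZR (Z.pos d2) <> 0) by (apply not_0_IZR; lia).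
  assert (nz1 : z1 <> 0%Z).
  { intros ->. assert (a1 = 0); [|lra]. apply Hinj; auto. apply Hzero.
    rewrite (phi0 H phi Had). rewrite E1. simpl; ring. }
  assert (nz2 : z2 <> 0%Z).
  { intros ->. assert (a2 = 0); [|lra]. apply Hinj; auto. apply Hzero.
    rewrite (phi0 H phi Had). rewrite E2. simpl; ring. }
  set (k1 := (z2 * Z.pos d1)%Z). set (k2 := (z1 * Z.pos d2)%Z).
  destruct (phiZ H phi Had k1 a1 h1) as [M1 F1].
  destruct (phiZ H phi Had k2 a2 h2) as [M2 F2].
  assert (K : IZR k1 * a1 = IZR k2 * a2).
  { assert (W : IZR k1 * a1 + - (IZR k2 * a2) = 0); [|lra].
    apply Hinj; [apply Hadd'; auto; apply Hneg; auto|apply Hzero|].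
    rewrite Had by (auto; apply Hneg; auto). rewrite (phiN H phi Had) by auto. rewrite F1, F2, (phi0 H phi Had).
    unfold k1, k2. rewrite !mult_IZR, E1, E2. field. auto. }
  exists (Z.abs_nat k1), (Z.abs_nat k2).
  assert (nk1 : k1 <> 0%Z) by (unfold k1; lia).
  assert (nk2 : k2 <> 0%Z) by (unfold k2; lia).
  split; [lia|split; [lia|]].
  rewrite !INR_IZR_INZ, !Nat2Z.inj_abs_nat, !abs_IZR.
  rewrite <- (Rabs_pos_eq a1), <- (Rabs_pos_eq a2) by lra.
  rewrite <- !Rabs_mult, K. reflexivity.
Qed.

Lemma euclid H : forall N p q c a1 a2, (p + q <= N)%nat -> (0 < p)%nat -> (0 < q)%nat ->
  0 < c -> a1 = INR p * c -> a2 = INR q * c -> Hset H a1 -> Hset H a2 ->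
  exists a n1 n2, Hset H a /\ 0 < a /\ (0 < n1)%nat /\ (0 < n2)%nat /\
    a1 = INR n1 * a /\ a2 = INR n2 * a.
Proof.
  induction N as [|N IH]; intros p q c a1 a2 hN hp hq hc e1 e2 m1 m2; [lia|].
  assert (pos1 : 0 < a1) by (rewrite e1; apply Rmult_lt_0_compat; auto; apply lt_0_INR; auto).
  destruct (lt_eq_lt_dec p q) as [[l|e]|l].
  - destruct (IH p (q - p)%nat c a1 (a2 - a1)) as (a & n1 & m & A & B & C & D & E & F);
      try lia; auto.
    + rewrite minus_INR by lia. rewrite e1, e2. ring.
    + apply Hadd'; auto. apply Hneg; auto.
    + exists a, n1, (n1 + m)%nat. repeat split; auto; try lia.
      rewrite plus_INR. lra.
  - subst q. exists a1, 1%nat, 1%nat. repeat split; auto; simpl; lra.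
  - destruct (IH (p - q)%nat q c (a1 - a2) a2) as (a & m & n2 & A & B & C & D & E & F);
      try lia; auto.
    + rewrite minus_INR by lia. rewrite e1, e2. ring.
    + apply Hadd'; auto. apply Hneg; auto.
    + exists a, (m + n2)%nat, n2. repeat split; auto; try lia.
      rewrite plus_INR. lra.
Qed.

Lemma common H : rank_one H -> forall a1 a2, Hset H a1 -> Hset H a2 -> 0 < a1 -> 0 < a2 ->
  exists a n1 n2, Hset H a /\ 0 < a /\ (0 < n1)%nat /\ (0 < n2)%nat /\
    a1 = INR n1 * a /\ a2 = INR n2 * a.
Proof.
  intros Hr a1 a2 h1 h2 p1 p2.
  destruct (commens H Hr a1 a2 h1 h2 p1 p2) as (P & Q & hP & hQ & E).
  assert (IQ : 0 < INR Q) by (apply lt_0_INR; auto).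
  assert (IP : 0 < INR P) by (apply lt_0_INR; auto).
  apply (euclid H (Q + P) Q P (a1 / INR Q)); auto.
  - apply Rdiv_lt_0_compat; auto.
  - field. lra.
  - apply (Rmult_eq_reg_l (INR Q)); [|lra]. rewrite <- E. field. lra.
Qed.

Lemma nbhd (U : Obj) x : carrier U x -> 0 < x ->
  exists e, 0 < e /\ forall y, x - e < y < x + e -> carrier U y.
Proof.
  destruct U as [S [Emp|[(a & b & ha & hab & E)|(b & hb & E)]]]; simpl; intros hx px.
  - exfalso; eapply Emp; eauto.
  - apply E in hx. exists (Rmin (x - a) (b - x)).
    assert (m1 := Rmin_l (x - a) (b - x)). assert (m2 := Rmin_r (x - a) (b - x)).
    split; [apply Rmin_glb_lt; lra|]. intros y hy. apply E. lra.
  - apply E in hx. exists (Rmin x (b - x)).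
    assert (m1 := Rmin_l x (b - x)). assert (m2 := Rmin_r x (b - x)).
    split; [apply Rmin_glb_lt; lra|]. intros y hy. apply E. lra.
Qed.

Lemma id_hom U : hom U U 1.
Proof. split; [lia|split; [|auto]]. intros _ x hx. simpl. rewrite Rmult_1_l. auto. Qed.

Lemma is_flat_FH H : nontrivial H -> rank_one H -> is_flat (FH H).
Proof.
  intros [x0 [Hx0 nx0]] Hr. split; [|split].
  - set (r := Rabs x0).
    assert (rp : 0 < r) by (apply Rabs_pos_lt; auto).
    assert (rH : Hset H r).
    { unfold r, Rabs. destruct Rcase_abs; auto. apply Hneg; auto. }
    assert (h2 : 0 < 2 * r) by lra.
    assert (rU : carrier (mkI 0 (2*r) (Rle_refl 0) h2) r) by (simpl; unfold ivl; lra).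
    exists (mkI 0 (2*r) (Rle_refl 0) h2).
    exists (exist _ r (conj rU (conj rH rp))). exact I.
  - intros C1 C2 [x1 [c1 [hx1 px1]]] [x2 [c2 [hx2 px2]]].
    destruct (common H Hr x1 x2 hx1 hx2 px1 px2) as (a & n1 & n2 & Ha & pa & pn1 & pn2 & e1 & e2).
    destruct (nbhd C1 x1 c1 px1) as (d1 & pd1 & N1).
    destruct (nbhd C2 x2 c2 px2) as (d2 & pd2 & N2).
    assert (I1 : 0 < INR n1) by (apply lt_0_INR; auto).
    assert (I2 : 0 < INR n2) by (apply lt_0_INR; auto).
    set (dl := Rmin a (Rmin (d1 / INR n1) (d2 / INR n2))).
    assert (l1 : dl <= a) by apply Rmin_l.
    assert (l2 : dl <= d1 / INR n1) by (eapply Rle_trans; [apply Rmin_r|apply Rmin_l]).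
    assert (l3 : dl <= d2 / INR n2) by (eapply Rle_trans; [apply Rmin_r|apply Rmin_r]).
    assert (l4 : 0 < dl) by (repeat apply Rmin_glb_lt; auto; apply Rdiv_lt_0_compat; auto).
    clearbody dl.
    assert (k1 : INR n1 * dl <= d1).
    { apply (Rmult_le_compat_l (INR n1)) in l2; [|lra]. field_simplify in l2; lra. }
    assert (k2 : INR n2 * dl <= d2).
    { apply (Rmult_le_compat_l (INR n2)) in l3; [|lra]. field_simplify in l3; lra. }
    assert (h1 : 0 <= a - dl) by lra. assert (h2 : a - dl < a + dl) by lra.
    set (C := mkI (a - dl) (a + dl) h1 h2).
    assert (aC : carrier C a) by (simpl; unfold ivl; lra).
    assert (neC : nonemptyO C) by (exists a; auto).
    assert (u1 : hom C C1 n1).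
    { split; [auto|split; [|intros F; exfalso; auto]].
      intros _ y [y1 y2]. apply N1.
      assert (INR n1 * (y - a) < INR n1 * dl) by (apply Rmult_lt_compat_l; lra).
      assert (INR n1 * (a - y) < INR n1 * dl) by (apply Rmult_lt_compat_l; lra).
      rewrite e1. split; nra. }
    assert (u2 : hom C C2 n2).
    { split; [auto|split; [|intros F; exfalso; auto]].
      intros _ y [y1 y2]. apply N2.
      assert (INR n2 * (y - a) < INR n2 * dl) by (apply Rmult_lt_compat_l; lra).
      assert (INR n2 * (a - y) < INR n2 * dl) by (apply Rmult_lt_compat_l; lra).
      rewrite e2. split; nra. }
    exists C, (exist _ a (conj aC (conj Ha pa))), n1, n2, u1, u2.
    split; apply FH_eq; cbn [Fmor FH]; rewrite FH_mor_val; simpl; auto.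
  - intros C D u v pu pv a E.
    assert (Eu : u = v).
    { apply (f_equal (@proj1_sig _ _)) in E. cbn [Fmor FH] in E.
      rewrite !FH_mor_val in E. pose proof (proj2_sig a) as [_ [_ px]]. set (x := proj1_sig a) in *.
      apply INR_eq. apply (Rmult_eq_reg_r x); auto; lra. }
    exists C, a, 1%nat, (id_hom C). split; [intros; subst; auto|].
    apply (proj1 (is_functor_FH H)).
Qed.

Theorem proposition3p3 :
  (* (i) F_H is a flat continuous functor C -> Sets *)
  (forall H : subgroupR, nontrivial H -> rank_one H ->
     is_functor (FH H) /\ is_flat (FH H) /\ is_continuous (FH H))
  /\
  (* (ii) H |-> p_H is injective on isomorphism classes of points *)
  (forall H1 H2 : subgroupR,
     nontrivial H1 -> rank_one H1 -> nontrivial H2 -> rank_one H2 ->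
     nat_iso (FH H1) (FH H2) ->
     forall x, Hset H1 x <-> Hset H2 x).
Proof.
  split.
  - intros H n r. split; [apply is_functor_FH|split; [apply is_flat_FH; auto|apply is_continuous_FH]].
  - intros H1 H2 _ _ _ _ I. apply part2; auto.
Qed.
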